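(* Let $A$ be a finite set of options containing a default option $0$, let $v$ be a Llull matrix on $A$ with path scores $v^*$, and let $D(z)$ be as in the context. Let $x,y\in A$ be distinct. If $D(x)\ge0$ and $D(x)>D(y)$, then $D(x)\ge v^*_{yx}-v^*_{xy}$. If moreover $D(x)>0$, then $D(x)>v^*_{yx}-v^*_{xy}$.
   Context: A Llull matrix on $A$ is a family of real numbers $v_{xy}\in[0,1]$, indexed by ordered pairs $(x,y)$ of distinct elements of $A$, with $v_{xy}+v_{yx}\le1$. Path scores: $v^*_{xy}=\max\min(v_{x_0x_1},\dots,v_{x_{m-1}x_m})$ over all paths $x_0\dots x_m$ ($m\ge1$, $x_0=x$, $x_m=y$, $x_i$ pairwise distinct). For $z\in A$, $D(z)=v^*_{z0}-v^*_{0z}$ if $z\ne0$ and $D(0)=0$. *)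

(* Defs.v *)
From HB Require Import structures.
From mathcomp Require Import all_boot all_order all_algebra.
Set Implicit Arguments. Unset Strict Implicit. Unset Printing Implicit Defensive.
Import Order.TTheory GRing.Theory Num.Theory.
Local Open Scope ring_scope.

Section Llull.
Variables (R : realFieldType) (A : finType).

(* A Llull matrix: v x y in [0,1] and v x y + v y x <= 1 for distinct x, y.
   Entries v x x are irrelevant (never used). *)
Definition llull (v : A -> A -> R) : Prop :=
  forall x y : A, x != y ->
    [/\ 0 <= v x y, v x y <= 1 & v x y + v y x <= 1].

(* For nonempty p
   this is min(v x x1, v x1 x2, ..., v x_{m-1} x_m); the value 1 for the
   empty tail is only the neutral element (all entries are <= 1). *)
Fixpoint pathmin (v : A -> A -> R) (x : A) (p : seq A) : R :=
  match p with
  | [::] => 1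
  | y :: q => Num.min (v x y) (pathmin v y q)
  end.

(* Path score v*_{xy}: maximum of pathmin over all paths x = x0, x1, ..., xm = y
   with m >= 1 and pairwise distinct x_i.  Such a path is x :: t with
   t an (n+1)-tuple, uniq (x :: t), last x t = y; necessarily n < #|A|.
   The neutral element 0 of the max is harmless since all scores are >= 0
   (and the direct path exists when x != y). *)
Definition vstar (v : A -> A -> R) (x y : A) : R :=
  \big[Num.max/0]_(n < #|A|)
    \big[Num.max/0]_(t : n.+1.-tuple A | uniq (x :: t) && (last x t == y))
      pathmin v x t.

Definition Dscore (v : A -> A -> R) (a0 z : A) : R :=
  if z == a0 then 0 else vstar v z a0 - vstar v a0 z.

End Llull.

(* Main.v *)
Require Import Defs.
From HB Require Import structures.
From mathcomp Require Import all_boot all_order all_algebra.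
From mathcomp Require Import lra.
Import Order.TTheory GRing.Theory Num.Theory.
Local Open Scope ring_scope.

Section Aux.
Variables (R : realFieldType) (A : finType) (v : A -> A -> R).

Definition goodp (a c : A) (t : seq A) :=
  [&& t != [::], uniq (a :: t) & last a t == c].

Lemma pathmin_le1 a t : pathmin v a t <= 1.
Proof. case: t => [|y q] //=; rewrite ge_min; apply/orP; right.
elim: q y => [|z q IH] y //=; rewrite ge_min IH orbT //. Qed.

Lemma pathmin_path (w : R) a t : w <= 1 ->
  (w <= pathmin v a t) = path (fun u z => w <= v u z) a t.
Proof. move=> w1; elim: t a => [|y q IH] a /=; first by rewrite w1.
by rewrite le_min IH. Qed.

Lemma vstar_attained a c :
  vstar v a c = 0 \/ exists t, goodp a c t /\ pathmin v a t = vstar v a c.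
Proof.
rewrite /vstar.
apply: (big_ind (fun z => z = 0 \/ exists t, goodp a c t /\ pathmin v a t = z)).
- by left.
- move=> z1 z2 H1 H2; rewrite /Num.max; case: ifP => _; by [].
- move=> n _.
  apply: (big_ind (fun z => z = 0 \/ exists t, goodp a c t /\ pathmin v a t = z)).
  + by left.
  + move=> z1 z2 H1 H2; rewrite /Num.max; case: ifP => _; by [].
  + move=> t /andP [Hu Hl]; right; exists (val t); split=> //.
    rewrite /goodp Hu Hl andbT /=.
    by case: t Hu Hl => [[|y q] /= Hs].
Qed.

Lemma vstar_ge a c t : goodp a c t -> pathmin v a t <= vstar v a c.
Proof.
case/and3P=> Hne Hu Hl.
have Hsz : (size t < #|A|)%N.
  by have := max_card (mem (a :: t)); rewrite (card_uniqP Hu).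
have Hs : size t == (size t).-1.+1 by case: t Hne {Hu Hl Hsz}.
have Hn : ((size t).-1 < #|A|)%N by rewrite (eqP Hs) in Hsz; apply: ltnW.
rewrite /vstar (bigD1 (Ordinal Hn)) //= le_max; apply/orP; left.
rewrite (bigD1 (Tuple Hs)) /=; last by rewrite Hl andbT.
by rewrite le_max lexx.
Qed.

Lemma vstar_ge0 (hv : llull v) a c : a != c -> 0 <= vstar v a c.
Proof.
move=> ac; apply: le_trans (@vstar_ge a c [:: c] _).
  by rewrite /= le_min ler01 andbT; case: (hv a c ac).
rewrite /goodp /= eqxx !andbT mem_seq1; exact: ac.

Qed.

Lemma vstar_trans (hv : llull v) a b c : a != c ->
  Num.min (vstar v a b) (vstar v b c) <= vstar v a c.
Proof.
move=> ac.
case: (vstar_attained a b) => [->|[t1 [g1 e1]]].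
  by rewrite ge_min vstar_ge0.
case: (vstar_attained b c) => [->|[t2 [g2 e2]]].
  by rewrite ge_min orbC vstar_ge0.
rewrite -e1 -e2.
set w := Num.min _ _.
have w1 : w <= 1 by rewrite ge_min pathmin_le1.
have p1 : path (fun u z => w <= v u z) a t1 by rewrite -pathmin_path // ge_min lexx.
have p2 : path (fun u z => w <= v u z) b t2 by rewrite -pathmin_path // ge_min lexx orbT.
case/and3P: g1 => _ _ /eqP l1; case/and3P: g2 => _ _ /eqP l2.
have p12 : path (fun u z => w <= v u z) a (t1 ++ t2) by rewrite cat_path p1 l1 p2.
have l12 : last a (t1 ++ t2) = c by rewrite last_cat l1 l2.
move: l12; case: (shortenP p12) => t' pt' ut' _ lt'.
apply: le_trans (@vstar_ge a c t' _); first by rewrite pathmin_path.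
rewrite /goodp ut' lt' eqxx andbT /=.
rewrite andbT; apply/eqP => t0; move: lt'; rewrite t0 /= => ca; by rewrite ca eqxx in ac.
Qed.
End Aux.

Theorem theorem3p5 (R : realFieldType) (A : finType) (a0 : A)
  (v : A -> A -> R) (hv : llull v) (x y : A) (hxy : x != y) :
  0 <= Dscore v a0 x -> Dscore v a0 y < Dscore v a0 x ->
  vstar v y x - vstar v x y <= Dscore v a0 x /\
  (0 < Dscore v a0 x -> vstar v y x - vstar v x y < Dscore v a0 x).
Proof.
rewrite /Dscore.
have [ex|hx0] := eqVneq x a0.
  rewrite ex in hxy *; rewrite eq_sym (negbTE hxy) => _ Hy; split; last by rewrite ltxx.
  by apply: ltW.
have [ey|hy0] := eqVneq y a0.
  rewrite ey in hxy *; rewrite ?eqxx ?(negbTE hx0) => _ H; split; [| move=> _]; lra.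
rewrite ?(negbTE hx0) ?(negbTE hy0).
have h0x : a0 != x by rewrite eq_sym.
have h0y : a0 != y by rewrite eq_sym.
have hyx : y != x by rewrite eq_sym.
have := @vstar_trans R A v hv x a0 y hxy.
have := @vstar_trans R A v hv y a0 x hyx.
have := @vstar_trans R A v hv x y a0 hx0.
have := @vstar_trans R A v hv a0 y x h0x.
have := @vstar_trans R A v hv y x a0 hy0.
have := @vstar_trans R A v hv a0 x y h0y.
rewrite !ge_min.
do 6 (case/orP=> ?).
all: by move=> *; split=> *; lra.
Qed.
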